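(* For the system (depending on the parameter $\alpha$) $$(u_{0,0}-u_{1,1})(v_{1,0}-v_{0,1})-\alpha+\beta=0,\qquad (v_{0,0}-v_{1,1})(u_{1,0}-u_{0,1})-\alpha+\beta=0,$$ the following is an extended symmetry: $$\frac{\partial u_{0,0}}{\partial \tau}=\frac{n}{v_{1,0}-v_{-1,0}},\qquad \frac{\partial v_{0,0}}{\partial \tau}=\frac{n}{u_{1,0}-u_{-1,0}},\qquad \frac{\partial\alpha}{\partial\tau}=-1.$$
   Context: Unknowns $u,v$ on $\mathbb Z^2$, $u_{i,j}=u(n+i,m+j)$, similarly $v$; $\alpha\neq\beta$ constants. Shifts $\mathcal S:n\mapsto n+1$, $\mathcal T:m\mapsto m+1$. For a system $\boldsymbol Q(\boldsymbol u_{0,0},\boldsymbol u_{1,0},\boldsymbol u_{0,1},\boldsymbol u_{1,1};\alpha)=\boldsymbol 0$ with $\boldsymbol u=(u,v)$ and Jacobians $\mathrm Q_{(p,q)}=\partial\boldsymbol Q/\partial\boldsymbol u_{p,q}$, a pair $(\boldsymbol M(n,m,[\boldsymbol u]),\xi)$ is an extended symmetry, written $\partial_\tau\boldsymbol u_{0,0}=\boldsymbol M$, $\partial_\tau\alpha=\xi$, if $\mathrm Q_{(0,0)}\boldsymbol M+\mathrm Q_{(1,0)}\mathcal S(\boldsymbol M)+\mathrm Q_{(0,1)}\mathcal T(\boldsymbol M)+\mathrm Q_{(1,1)}\mathcal S\mathcal T(\boldsymbol M)+\xi\,\partial_\alpha\boldsymbol Q=\boldsymbol 0$ holds on all solutions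 of the system. *)

(* Defs.v *)
From mathcomp Require Import all_boot all_order all_algebra.
Set Implicit Arguments. Unset Strict Implicit. Unset Printing Implicit Defensive.
Import Order.TTheory GRing.Theory Num.Theory.
Local Open Scope ring_scope.

Definition lat (R : Type) := int -> int -> R.

Section System.
Variable R : numFieldType.

Definition mx2 (a b c d : R) : 'M[R]_2 :=
  \matrix_(i < 2, j < 2)
    (if i == 0 :> nat then (if j == 0 :> nat then a else b)
     else (if j == 0 :> nat then c else d)).

Definition cv2 (x y : R) : 'cV[R]_2 :=
  \col_(i < 2) (if i == 0 :> nat then x else y).

Definition Qsys (beta alpha : R) (u00 v00 u10 v10 u01 v01 u11 v11 : R)
  : 'cV[R]_2 :=
  cv2 ((u00 - u11) * (v10 - v01) - alpha + beta)
      ((v00 - v11) * (u10 - u01) - alpha + beta).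

(* Jacobians Q_(p,q) = dQ/d(u_{p,q}, v_{p,q}) of Qsys (columns: d/du, d/dv),
   and dQ/dalpha. Q is polynomial, these are its partial derivatives. *)
Definition Q00 (u00 v00 u10 v10 u01 v01 u11 v11 : R) : 'M[R]_2 :=
  mx2 (v10 - v01) 0
      0 (u10 - u01).
Definition Q10 (u00 v00 u10 v10 u01 v01 u11 v11 : R) : 'M[R]_2 :=
  mx2 0 (u00 - u11)
      (v00 - v11) 0.
Definition Q01 (u00 v00 u10 v10 u01 v01 u11 v11 : R) : 'M[R]_2 :=
  mx2 0 (- (u00 - u11))
      (- (v00 - v11)) 0.
Definition Q11 (u00 v00 u10 v10 u01 v01 u11 v11 : R) : 'M[R]_2 :=
  mx2 (- (v10 - v01)) 0
      0 (- (u10 - u01)).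
Definition Qalpha : 'cV[R]_2 := cv2 (-1) (-1).

Definition is_solution (alpha beta : R) (u v : lat R) : Prop :=
  forall n m : int,
    Qsys beta alpha (u n m) (v n m) (u (n+1) m) (v (n+1) m)
         (u n (m+1)) (v n (m+1)) (u (n+1) (m+1)) (v (n+1) (m+1)) = 0.

(* Linearisation at lattice point (n,m) in direction (Mu,Mv) (lattice
   functions, so that S(M) = M at (n+1,m), etc.) with dalpha = xi:
   Q_(0,0) M + Q_(1,0) S(M) + Q_(0,1) T(M) + Q_(1,1) ST(M) + xi dQ/dalpha *)
Definition linearised (alpha beta : R) (u v Mu Mv : lat R) (xi : R)
  (n m : int) : 'cV[R]_2 :=
  let J (Q : R -> R -> R -> R -> R -> R -> R -> R -> 'M[R]_2) :=
      Q (u n m) (v n m) (u (n+1) m) (v (n+1) m)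
        (u n (m+1)) (v n (m+1)) (u (n+1) (m+1)) (v (n+1) (m+1)) in
  J Q00 *m cv2 (Mu n m) (Mv n m)
  + J Q10 *m cv2 (Mu (n+1) m) (Mv (n+1) m)
  + J Q01 *m cv2 (Mu n (m+1)) (Mv n (m+1))
  + J Q11 *m cv2 (Mu (n+1) (m+1)) (Mv (n+1) (m+1))
  + xi *: Qalpha.

End System.

(* Main.v *)
Require Import Defs.
From mathcomp Require Import all_boot all_order all_algebra.
From mathcomp Require Import ring.
Import Order.TTheory GRing.Theory Num.Theory.
Local Open Scope ring_scope.

Lemma key (R : fieldType) (al be N M A B C D p q r s : R) :
  al != be -> M = N + 1 ->
  (A - B) * (p - q) - al + be = 0 ->
  (r - q) * (A - C) - al + be = 0 ->
  (p - s) * (D - B) - al + be = 0 ->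
  p != r -> s != q -> D != A ->
  (p - q) * (N / (p - r)) + (A - B) * (M / (D - A))
  - (A - B) * (N / (B - C)) - (p - q) * (M / (s - q)) + 1 = 0.
Proof.
move=> hab -> E1 E2 E3 hpr hsq hDA.
have hc : al - be != 0 by rewrite subr_eq0.
have e1 : (A - B) * (p - q) = al - be.
  by rewrite -[al - be]add0r -E1; ring.
have e2 : (r - q) * (A - C) = al - be.
  by rewrite -[al - be]add0r -E2; ring.
have e3 : (p - s) * (D - B) = al - be.
  by rewrite -[al - be]add0r -E3; ring.
have hAC : A - C != 0.
  by apply/eqP => h; move: hc; rewrite -e2 h mulr0 eqxx.
have hDB : D - B != 0.
  by apply/eqP => h; move: hc; rewrite -e3 h mulr0 eqxx.
have f1 : (p - r) * (A - C) = (p - q) * (B - C).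
  have : (p - r) * (A - C) = (p - q) * (A - C) - (r - q) * (A - C) by ring.
  move=> ->; rewrite e2 -e1; ring.
have f2 : (s - q) * (D - B) = (p - q) * (D - A).
  have : (s - q) * (D - B) = (p - q) * (D - B) - (p - s) * (D - B) by ring.
  move=> ->; rewrite e3 -e1; ring.
rewrite -subr_eq0 in hpr; rewrite -subr_eq0 in hsq; rewrite -subr_eq0 in hDA.
have hBC : B - C != 0.
  apply/eqP => h; move: f1; rewrite h mulr0 => /eqP; rewrite mulf_eq0.
  by rewrite (negbTE hpr) (negbTE hAC).
set x := N / (p - r); set y := (N + 1) / (D - A).
set z := N / (B - C); set w := (N + 1) / (s - q).
have hx : x * (p - r) = N by rewrite /x divfK.
have hy : y * (D - A) = N + 1 by rewrite /y divfK.
have hz : z * (B - C) = N by rewrite /z divfK.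
have hw : w * (s - q) = N + 1 by rewrite /w divfK.
have g1 : (p - q) * x = (A - C) * z.
  apply: (mulIf hBC).
  have -> : (p - q) * x * (B - C) = x * ((p - q) * (B - C)) by ring.
  rewrite -f1.
  have -> : x * ((p - r) * (A - C)) = (x * (p - r)) * (A - C) by ring.
  rewrite hx -hz; ring.
have g2 : (p - q) * w = (D - B) * y.
  apply: (mulIf hDA).
  have -> : (p - q) * w * (D - A) = w * ((p - q) * (D - A)) by ring.
  rewrite -f2.
  have -> : w * ((s - q) * (D - B)) = (w * (s - q)) * (D - B) by ring.
  rewrite hw -hy; ring.
rewrite g1 g2.
have -> : (A - C) * z + (A - B) * y - (A - B) * z - (D - B) * y + 1
  = z * (B - C) - y * (D - A) + 1 by ring.
rewrite hz hy; ring.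
Qed.

Theorem mainTheorem4 (R : numFieldType) (alpha beta : R) (u v : lat R) :
  alpha != beta ->
  is_solution alpha beta u v ->
  (forall n m : int, u (n+1) m != u (n-1) m) ->
  (forall n m : int, v (n+1) m != v (n-1) m) ->
  forall n m : int,
    linearised alpha beta u v
      (fun n m => n%:~R / (v (n+1) m - v (n-1) m))
      (fun n m => n%:~R / (u (n+1) m - u (n-1) m))
      (-1) n m = 0.
Proof.
move=> hab hs hu hv n m.
have eq1 : forall a b, (u a b - u (a+1) (b+1)) * (v (a+1) b - v a (b+1)) - alpha + beta = 0.
  move=> a b; have := congr1 (fun M : 'cV[R]_2 => M 0 0) (hs a b).
  by rewrite /Qsys /cv2 !mxE.
have eq2 : forall a b, (v a b - v (a+1) (b+1)) * (u (a+1) b - u a (b+1)) - alpha + beta = 0.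
  move=> a b; have := congr1 (fun M : 'cV[R]_2 => M 1 0) (hs a b).
  by rewrite /Qsys /cv2 !mxE.
have hM : (n + 1)%:~R = n%:~R + 1 :> R by rewrite intrD.
have hn1 : n - 1 + 1 = n by rewrite subrK.
have hn2 : n + 1 - 1 = n by rewrite addrK.
apply/matrixP => i j; rewrite !mxE.
rewrite /Q00 /Q10 /Q01 /Q11 /Qalpha /mx2 /cv2.
rewrite !big_ord_recr !big_ord0 /= !mxE /=.
rewrite !hn2.
case: i => [[|[|//]] hi] /=.
- have E2 := eq2 (n-1) m; rewrite hn1 in E2.
  have hsq := hv (n+1) (m+1); rewrite hn2 in hsq.
  have hDA := hu (n+1) m; rewrite hn2 in hDA.
  have K := @key R _ _ _ _ _ _ _ _ _ _ _ _ hab hM (eq1 n m) E2 (eq2 (n+1) m) (hv n m) hsq hDA.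
  by rewrite -[RHS]K; ring.
- have E2 := eq1 (n-1) m; rewrite hn1 in E2.
  have hsq := hu (n+1) (m+1); rewrite hn2 in hsq.
  have hDA := hv (n+1) m; rewrite hn2 in hDA.
  have K := @key R _ _ _ _ _ _ _ _ _ _ _ _ hab hM (eq2 n m) E2 (eq1 (n+1) m) (hu n m) hsq hDA.
  by rewrite -[RHS]K; ring.
Qed.
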